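(* Let $V$ be an irreducible module of the Clifford algebra $\mathrm{Cl}_{r,s}$, with representation $J\colon\mathrm{Cl}_{r,s}\to\mathrm{End}(V)$, $J_z^2=-\langle z,z\rangle_{\mathbb R^{r,s}}\mathrm{Id}_V$ for $z\in\mathbb R^{r,s}$, and let $\langle\cdot\,,\cdot\rangle_V\colon V\times V\to\mathbb R$ be a symmetric bilinear form satisfying $\langle J_zv,w\rangle_V+\langle v,J_zw\rangle_V=0$ for all $z\in\mathbb R^{r,s}$ and all $v,w\in V$. Then $\langle\cdot\,,\cdot\rangle_V$ is either non-degenerate or identically zero.
   Context: $\mathbb R^{r,s}$ is $\mathbb R^{r+s}$ with the symmetric bilinear form whose quadratic form is $x_1^2+\dots+x_r^2-x_{r+1}^2-\dots-x_{r+s}^2$, and $\mathrm{Cl}_{r,s}$ is the real Clifford algebra generated by $\mathbb R^{r,s}$ with relation $z^2=-\langle z,z\rangle_{\mathbb R^{r,s}}\cdot 1$. A $\mathrm{Cl}_{r,s}$-module is a real vector space with an algebra homomorphism $J\colon\mathrm{Cl}_{r,s}\to\mathrm{End}(V)$, $z\mapsto J_z$. *)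

(* Defs.v *)
From HB Require Import structures.
From mathcomp Require Import all_boot all_order all_algebra.
From mathcomp Require Import reals.

Set Implicit Arguments. Unset Strict Implicit. Unset Printing Implicit Defensive.
Import Order.TTheory GRing.Theory Num.Theory.
Local Open Scope ring_scope.

Definition qform (R : realType) (r s : nat) (z : 'rV[R]_(r + s)) : R :=
  \sum_(i < r + s) (if (i < r)%N then z 0 i ^+ 2 else - z 0 i ^+ 2).

(* A Cl_{r,s}-module structure on V = 'rV[R]_n (vectors act on the right:
   J_z v := v *m J z).  By the universal property of Cl_{r,s}, an algebra
   homomorphism Cl_{r,s} -> End(V) is the same as a linear map
   z |-> J_z with J_z^2 = - <z,z> Id. *)
Definition cl_module (R : realType) (r s n : nat)
    (J : 'rV[R]_(r + s) -> 'M[R]_n) : Prop :=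
  (forall (a : R) (z1 z2 : 'rV[R]_(r + s)), J (a *: z1 + z2) = a *: J z1 + J z2) /\
  (forall z : 'rV[R]_(r + s), J z *m J z = - (qform z)%:M).

(* Irreducible: V is nonzero and the only subspaces of V invariant under all
   J_z (equivalently under the image of Cl_{r,s}) are 0 and V. *)
Definition cl_irreducible (R : realType) (r s n : nat)
    (J : 'rV[R]_(r + s) -> 'M[R]_n) : Prop :=
  (0 < n)%N /\
  forall U : 'M[R]_n, (forall z, stablemx U (J z)) ->
    (U == (0 : 'M[R]_n))%MS \/ (U == (1%:M : 'M[R]_n))%MS.

Definition bform (R : realType) (n : nat) (B : 'M[R]_n) (v w : 'rV[R]_n) : R :=
  (v *m B *m w^T) 0 0.

Definition bform_nondegenerate (R : realType) (n : nat) (B : 'M[R]_n) : Prop :=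
  forall v : 'rV[R]_n, (forall w, bform B v w = 0) -> v = 0.

(* Main.v *)
Require Import Defs.
From HB Require Import structures.
From mathcomp Require Import all_boot all_order all_algebra.
From mathcomp Require Import reals.

Import Order.TTheory GRing.Theory Num.Theory.
Local Open Scope ring_scope.

Lemma rv_eq0 (R : realType) n (x : 'rV[R]_n) :
  (forall w : 'rV[R]_n, (x *m w^T) 0 0 = 0) -> x = 0.
Proof.
move=> H; apply/rowP => j; rewrite mxE.
have := H (delta_mx 0 j); rewrite trmx_delta -colE mxE => ->; done.
Qed.

Lemma rad_eq (R : realType) n (B : 'M[R]_n) (v : 'rV[R]_n) :
  (forall w, bform B v w = 0) -> v *m B = 0.
Proof. by move=> H; apply: rv_eq0 => w; exact: H. Qed.

Theorem lemma2p2 (R : realType) (r s n : nat)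
    (J : 'rV[R]_(r + s) -> 'M[R]_n) (B : 'M[R]_n) :
  cl_module J -> cl_irreducible J ->
  (forall v w : 'rV[R]_n, bform B v w = bform B w v) ->
  (forall (z : 'rV[R]_(r + s)) (v w : 'rV[R]_n),
      bform B (v *m J z) w + bform B v (w *m J z) = 0) ->
  bform_nondegenerate B \/ (forall v w : 'rV[R]_n, bform B v w = 0).
Proof.
move=> _ [_ Hirr] _ Hinv.
have Hv : forall z (v : 'rV[R]_n), v *m B = 0 -> v *m J z *m B = 0.
  move=> z v vB; apply: rad_eq => w.
  have := Hinv z v w; rewrite {2}/bform vB !mul0mx.
  by rewrite [X in _ + X]mxE addr0.
have st : forall z, stablemx (kermx B) (J z).
  move=> z; have kB := mulmx_ker B; move: kB.
  set K := kermx B => kB; apply/sub_kermxP; apply/row_matrixP => i.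
  clearbody K; rewrite !row_mul row0; apply: Hv.
  by rewrite -row_mul kB; apply/rowP => j; rewrite !mxE.
case: (Hirr _ st) => /andP [H1 H2]; [left | right].
  move=> v Hw; apply/eqP; rewrite -submx0.
  apply: submx_trans H1; apply/sub_kermxP; exact: rad_eq.
move=> v w.
have : (v <= kermx B)%MS by apply: submx_trans H2; exact: submx1.
by move/sub_kermxP; rewrite /bform => ->; rewrite mul0mx mxE.
Qed.
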